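(* Let $(W,W')$ be random vectors in $\mathbb{Z}^d$ such that $(W,W')$ and $(W',W)$ have the same distribution, with $\mathbb{E}|W'-W|^2<\infty$. Put $\xi:=W'-W$, let $\mathcal J:=\{J\in\mathbb{Z}^d: q^J:=\mathbb{P}[\xi=J]>0\}$, and suppose that for each $1\le j\le d$ there are $J^{(j)}_1,\dots,J^{(j)}_{r(j)}\in\mathcal J$ with $\sum_{l=1}^{r(j)}J^{(j)}_l=e^{(j)}$ (fixed choices). For $Q^J(W):=\mathbb{P}[\xi=J\mid W]$ let $u^J:=(q^J)^{-1}\mathbb{E}|Q^J(W)-q^J|$, $\tilde u_j:=\sum_{l=1}^{r(j)}(u^{J^{(j)}_l}+u^{-J^{(j)}_l})$, $\tilde u^*:=\max_j\tilde u_j$ and $u^*:=\sup_{J\in\mathcal J}u^J$. Then for each $1\le j\le d$ and each $J\in\mathcal J$: (i) $d_{TV}(\mathcal{L}(W+e^{(j)}),\mathcal{L}(W))\le\tilde u_j\le\tilde u^*$; (ii) $d_{TV}(\mathcal{L}(W+e^{(j)}\mid\xi=J),\mathcal{L}(W\mid\xi=J))\le\tilde u_j+2u^J\le\tilde u^*+2u^*$. Furthermore, with $\sigma^2:=\mathbb{E}\{\xi\xi^T\}$ and $R_2(W):=\mathbb{E}\{\xi\xi^T\mid W\}-\sigma^2$, (iii) $\mathbb{E}\|R_2(W)\|_1\le d\,\mathrm{Tr}(\sigma^2)\,u^*$.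
   Context: $\|M\|_1:=\sum_{i,j}|M_{ij}|$; $e^{(j)}$ is the $j$-th coordinate vector. (By exchangeability, $q^{-J}=q^J$, so $-J\in\mathcal J$ whenever $J\in\mathcal J$.) *)

(* Defs.v *)
From Stdlib Require Import Reals ZArith List Classical ClassicalEpsilon ClassicalDescription.
Import ListNotations.
Open Scope R_scope.

Definition sum_list {T : Type} (f : T -> R) (l : list T) : R :=
  fold_right (fun x acc => f x + acc) 0 l.

Definition has_sum {T : Type} (f : T -> R) (s : R) : Prop :=
  forall eps, 0 < eps -> exists F : list T, NoDup F /\
    forall G : list T, NoDup G -> incl F G -> Rabs (sum_list f G - s) < eps.

(* the sum (0 if not summable) *)
Definition Sum {T : Type} (f : T -> R) : R :=
  match excluded_middle_informative (exists s, has_sum f s) with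
  | left H => proj1_sig (constructive_indefinite_description _ H)
  | right _ => 0
  end.

(* supremum (0 if no least upper bound exists) *)
Definition Rsup (E : R -> Prop) : R :=
  match excluded_middle_informative (exists m, is_lub E m) with
  | left H => proj1_sig (constructive_indefinite_description _ H)
  | right _ => 0
  end.

(* ---------- vectors of Z^d as lists of length d ---------- *)
Definition vec := list Z.
Definition veq_dec := list_eq_dec Z.eq_dec.
Definition vadd (u v : vec) : vec := map (fun ab => (fst ab + snd ab)%Z) (combine u v).
Definition vsub (u v : vec) : vec := map (fun ab => (fst ab - snd ab)%Z) (combine u v).
Definition vneg (u : vec) : vec := map Z.opp u.
Definition zeros (d : nat) : vec := repeat 0%Z d.
(* e^{(j)}, j = 0..d-1 (0-based) *)
Definition unitv (d j : nat) : vec :=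
  map (fun i => if Nat.eqb i j then 1%Z else 0%Z) (seq 0 d).
Definition vsum (d : nat) (Js : list vec) : vec := fold_right vadd (zeros d) Js.
Definition norm2 (v : vec) : R := fold_right (fun x acc => IZR x * IZR x + acc) 0 v.

(* p w w' = P[W = w, W' = w'] : joint pmf of (W,W') on Z^d x Z^d *)
Definition is_joint_pmf (d : nat) (p : vec -> vec -> R) : Prop :=
  (forall w w', 0 <= p w w') /\
  (forall w w', p w w' <> 0 -> length w = d /\ length w' = d) /\
  has_sum (fun ww : vec * vec => p (fst ww) (snd ww)) 1.

Definition second_moment_finite (p : vec -> vec -> R) : Prop :=
  exists s, has_sum (fun ww : vec * vec => p (fst ww) (snd ww) * norm2 (vsub (snd ww) (fst ww))) s.

Definition pW (p : vec -> vec -> R) (w : vec) : R := Sum (fun w' => p w w').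
Definition pWxi (p : vec -> vec -> R) (w J : vec) : R :=
  Sum (fun w' => if veq_dec (vsub w' w) J then p w w' else 0).
Definition qJ (p : vec -> vec -> R) (J : vec) : R := Sum (fun w => pWxi p w J).
(* Q^J(w) = P[xi = J | W = w] (a version; 0 off the support of W) *)
Definition QJ (p : vec -> vec -> R) (J w : vec) : R :=
  if Rlt_dec 0 (pW p w) then pWxi p w J / pW p w else 0.
Definition uJ (p : vec -> vec -> R) (J : vec) : R :=
  / qJ p J * Sum (fun w => pW p w * Rabs (QJ p J w - qJ p J)).
Definition ut (p : vec -> vec -> R) (Js : list vec) : R :=
  sum_list (fun J => uJ p J + uJ p (vneg J)) Js.
Definition utstar (d : nat) (p : vec -> vec -> R) (Jc : nat -> list vec) : R :=
  fold_right Rmax 0 (map (fun j => ut p (Jc j)) (seq 0 d)).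
Definition ustar (p : vec -> vec -> R) : R :=
  Rsup (fun x => exists J, 0 < qJ p J /\ x = uJ p J).

Definition push (f : vec -> vec) (mu : vec -> R) (x : vec) : R :=
  Sum (fun y => if veq_dec (f y) x then mu y else 0).
Definition prob (mu : vec -> R) (A : vec -> bool) : R :=
  Sum (fun x => if A x then mu x else 0).
Definition dTV (mu nu : vec -> R) : R :=
  Rsup (fun r => exists A : vec -> bool, r = Rabs (prob mu A - prob nu A)).

Definition condW (p : vec -> vec -> R) (J : vec) (w : vec) : R := pWxi p w J / qJ p J.

(* i-th coordinate of xi = W' - W (0-based) *)
Definition xc (i : nat) (ww : vec * vec) : R := IZR (nth i (vsub (snd ww) (fst ww)) 0%Z).
Definition sigma2 (p : vec -> vec -> R) (i k : nat) : R :=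
  Sum (fun ww : vec * vec => p (fst ww) (snd ww) * (xc i ww * xc k ww)).
(* E[xi_i xi_k | W = w] (a version; 0 off the support of W) *)
Definition condxx (p : vec -> vec -> R) (i k : nat) (w : vec) : R :=
  if Rlt_dec 0 (pW p w) then Sum (fun w' => p w w' * (xc i (w, w') * xc k (w, w'))) / pW p w else 0.
Definition ER2norm1 (d : nat) (p : vec -> vec -> R) : R :=
  Sum (fun w => pW p w *
    sum_list (fun i => sum_list (fun k => Rabs (condxx p i k w - sigma2 p i k)) (seq 0 d)) (seq 0 d)).
Definition trace_sigma2 (d : nat) (p : vec -> vec -> R) : R :=
  sum_list (fun i => sigma2 p i i) (seq 0 d).

(* Main.v *)
Require Import Defs.
From Stdlib Require Import Reals ZArith List Lra Lia FinFun.
From Stdlib Require Import Classical ClassicalEpsilon ClassicalDescription FunctionalExtensionality.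
Import ListNotations.
Open Scope R_scope.

Ltac rabs := unfold Rabs in *; repeat match goal with
  | |- context [Rcase_abs ?x] => destruct (Rcase_abs x)
  | H : context [Rcase_abs ?x] |- _ => destruct (Rcase_abs x) end.

Section FinSum.
Context {T : Type}.

Lemma sl_nil (f : T -> R) : sum_list f [] = 0. Proof. reflexivity. Qed.
Lemma sl_cons (f : T -> R) a l : sum_list f (a :: l) = f a + sum_list f l.
Proof. reflexivity. Qed.
Lemma sl_app (f : T -> R) l1 l2 : sum_list f (l1 ++ l2) = sum_list f l1 + sum_list f l2.
Proof. induction l1; simpl; [lra|]. rewrite IHl1; lra. Qed.
Lemma sl_plus (f g : T -> R) l : sum_list (fun x => f x + g x) l = sum_list f l + sum_list g l.
Proof. induction l; simpl; [lra|]. rewrite IHl; lra. Qed.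
Lemma sl_scal (c : R) (f : T -> R) l : sum_list (fun x => c * f x) l = c * sum_list f l.
Proof. induction l; simpl; [lra|]. rewrite IHl; lra. Qed.
Lemma sl_ext (f g : T -> R) l : (forall x, In x l -> f x = g x) -> sum_list f l = sum_list g l.
Proof. induction l; simpl; intros H; [lra|]. rewrite H, IHl; auto. Qed.
Lemma sl_le (f g : T -> R) l : (forall x, In x l -> f x <= g x) -> sum_list f l <= sum_list g l.
Proof. induction l; simpl; intros H; [lra|]. specialize (IHl (fun x h => H x (or_intror h))).
  specialize (H a (or_introl eq_refl)). lra. Qed.
Lemma sl_nonneg (f : T -> R) l : (forall x, 0 <= f x) -> 0 <= sum_list f l.
Proof. intros H. induction l; simpl; [lra|]. specialize (H a); lra. Qed.
Lemma sl_zero (f : T -> R) l : (forall x, In x l -> f x = 0) -> sum_list f l = 0.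
Proof. induction l; simpl; intros H; [lra|]. rewrite H, IHl; auto; lra. Qed.
Lemma sl_abs (f : T -> R) l : Rabs (sum_list f l) <= sum_list (fun x => Rabs (f x)) l.
Proof. induction l; simpl. rewrite Rabs_R0; lra.
  eapply Rle_trans. apply Rabs_triang. lra. Qed.
Lemma sl_const (c : R) l : sum_list (fun _ : T => c) l = INR (length l) * c.
Proof. induction l; simpl length; [simpl; lra|]. rewrite sl_cons, IHl, S_INR; lra. Qed.
End FinSum.

Lemma sl_map {A B} (f : B -> R) (g : A -> B) l : sum_list f (map g l) = sum_list (fun x => f (g x)) l.
Proof. induction l; simpl; auto. rewrite IHl; auto. Qed.

Section Dec.
Context {T : Type} (eqd : forall x y : T, {x = y} + {x <> y}).

Lemma sl_remove_le (f : T -> R) a H : (forall x, 0 <= f x) -> In a H ->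
  f a + sum_list f (remove eqd a H) <= sum_list f H.
Proof.
  intros Hf. induction H as [|b H IH]; simpl; [tauto|]. intros [->|Hin].
  - destruct (eqd a a) as [_|n]; [|congruence].
    assert (sum_list f (remove eqd a H) <= sum_list f H).
    { clear IH. induction H as [|c H IH2]; simpl; [lra|].
      destruct (eqd a c); simpl; specialize (Hf c); lra. }
    lra.
  - destruct (eqd a b) as [->|n].
    + assert (sum_list f (remove eqd b H) <= sum_list f H).
      { clear IH Hin. induction H as [|c H IH2]; simpl; [lra|].
        destruct (eqd b c); simpl; specialize (Hf c); lra. }
      specialize (Hf b); lra.
    + simpl. specialize (IH Hin). lra.
Qed.

Lemma sl_incl_le (f : T -> R) G H : (forall x, 0 <= f x) -> NoDup G -> incl G H ->
  sum_list f G <= sum_list f H.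
Proof.
  intros Hf ND. revert H. induction ND as [|a G Ha ND IH]; intros H Hi.
  - simpl. apply sl_nonneg; auto.
  - simpl. assert (Ia : In a H) by (apply Hi; left; auto).
    assert (incl G (remove eqd a H)).
    { intros x Hx. apply in_in_remove. intros ->; auto. apply Hi; right; auto. }
    specialize (IH _ H0). pose proof (sl_remove_le f a H Hf Ia). lra.
Qed.

Lemma sl_single (f : T -> R) x0 G : NoDup G -> In x0 G -> (forall x, x <> x0 -> f x = 0) ->
  sum_list f G = f x0.
Proof.
  intros ND. induction ND as [|a G Ha ND IH]; simpl; [tauto|]. intros [->|Hin] Hz.
  - rewrite sl_zero; [lra|]. intros x Hx. apply Hz. intros ->; auto.
  - rewrite IH; auto. rewrite Hz; [lra|]. intros ->; auto.
Qed.

Lemma NoDup_union (F1 F2 : list T) : NoDup (nodup eqd (F1 ++ F2)) /\ incl F1 (nodup eqd (F1 ++ F2)) /\ incl F2 (nodup eqd (F1 ++ F2)).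
Proof.
  split; [apply NoDup_nodup|]. split; intros x Hx; apply nodup_In; apply in_or_app; auto.
Qed.
End Dec.
Section HS.
Context {T : Type} (eqd : forall x y : T, {x = y} + {x <> y}).
Implicit Types f g : T -> R.

Definition Summable f := exists s, has_sum f s.

Lemma has_sum_unique f s t : has_sum f s -> has_sum f t -> s = t.
Proof.
  intros Hs Ht. destruct (Req_dec s t) as [|n]; auto. exfalso.
  set (e := Rabs (s - t) / 2). assert (He : 0 < e).
  { unfold e. assert (0 < Rabs (s - t)) by (apply Rabs_pos_lt; lra). lra. }
  destruct (Hs e He) as [F1 [_ H1]]. destruct (Ht e He) as [F2 [_ H2]].
  destruct (NoDup_union eqd F1 F2) as [ND [I1 I2]].
  specialize (H1 _ ND I1). specialize (H2 _ ND I2). unfold e in *.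
  rabs; lra.
Qed.

Lemma Sum_eq f s : has_sum f s -> Sum f = s.
Proof.
  intros H. unfold Sum. destruct excluded_middle_informative as [e|n].
  - destruct (constructive_indefinite_description _ e) as [t Ht]. simpl.
    eapply has_sum_unique; eauto.
  - exfalso; apply n; eauto.
Qed.

Lemma Sum_spec f : Summable f -> has_sum f (Sum f).
Proof. intros [s Hs]. rewrite (Sum_eq f s Hs); auto. Qed.

Lemma has_sum_ext f g s : (forall x, f x = g x) -> has_sum f s -> has_sum g s.
Proof.
  intros E H e He. destruct (H e He) as [F [ND HF]]. exists F; split; auto.
  intros G NG IG. rewrite <- (sl_ext f g); auto.
Qed.

Lemma Sum_ext f g : (forall x, f x = g x) -> Sum f = Sum g.
Proof.
  intros E. assert (E' : f = g) by (apply functional_extensionality; auto). now subst.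
Qed.

Lemma has_sum_plus f g s t : has_sum f s -> has_sum g t -> has_sum (fun x => f x + g x) (s + t).
Proof.
  intros Hf Hg e He. destruct (Hf (e/2) ltac:(lra)) as [F1 [_ H1]].
  destruct (Hg (e/2) ltac:(lra)) as [F2 [_ H2]].
  destruct (NoDup_union eqd F1 F2) as [ND [I1 I2]].
  exists (nodup eqd (F1 ++ F2)); split; auto. intros G NG IG.
  rewrite sl_plus. specialize (H1 G NG (incl_tran I1 IG)). specialize (H2 G NG (incl_tran I2 IG)).
  rabs; lra.
Qed.

Lemma has_sum_scal c f s : has_sum f s -> has_sum (fun x => c * f x) (c * s).
Proof.
  intros Hf e He. set (e' := e / (Rabs c + 1)).
  assert (0 < e') by (unfold e'; apply Rdiv_lt_0_compat; [lra|]; pose proof (Rabs_pos c); lra).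
  destruct (Hf e' H) as [F [ND HF]]. exists F; split; auto. intros G NG IG.
  rewrite sl_scal. specialize (HF G NG IG).
  replace (c * sum_list f G - c * s) with (c * (sum_list f G - s)) by ring.
  rewrite Rabs_mult. assert (Rabs c * Rabs (sum_list f G - s) <= Rabs c * e').
  { apply Rmult_le_compat_l; [apply Rabs_pos|lra]. }
  assert (Rabs c * e' < e).
  { unfold e'. pose proof (Rabs_pos c).
    apply (Rmult_lt_reg_r (Rabs c + 1)); [lra|]. field_simplify; lra. }
  lra.
Qed.

Lemma has_sum_minus f g s t : has_sum f s -> has_sum g t -> has_sum (fun x => f x - g x) (s - t).
Proof.
  intros Hf Hg. apply has_sum_scal with (c := -1) in Hg.
  pose proof (has_sum_plus _ _ _ _ Hf Hg). eapply has_sum_ext; [|replace (s - t) with (s + -1 * t) by ring; eauto].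
  intros; simpl; ring.
Qed.

Lemma has_sum_zero : has_sum (fun _ : T => 0) 0.
Proof. intros e He. exists []; split; [constructor|]. intros. rewrite sl_zero; auto. rabs; lra. Qed.

Lemma Sum_plus f g : Summable f -> Summable g -> Sum (fun x => f x + g x) = Sum f + Sum g.
Proof. intros Hf Hg. apply Sum_eq, has_sum_plus; apply Sum_spec; auto. Qed.
Lemma Sum_minus f g : Summable f -> Summable g -> Sum (fun x => f x - g x) = Sum f - Sum g.
Proof. intros Hf Hg. apply Sum_eq, has_sum_minus; apply Sum_spec; auto. Qed.
Lemma Sum_scal c f : Summable f -> Sum (fun x => c * f x) = c * Sum f.
Proof. intros Hf. apply Sum_eq, has_sum_scal; apply Sum_spec; auto. Qed.
Lemma Summable_plus f g : Summable f -> Summable g -> Summable (fun x => f x + g x).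
Proof. intros [s Hs] [t Ht]. eexists; apply has_sum_plus; eauto. Qed.
Lemma Summable_minus f g : Summable f -> Summable g -> Summable (fun x => f x - g x).
Proof. intros [s Hs] [t Ht]. eexists; apply has_sum_minus; eauto. Qed.
Lemma Summable_scal c f : Summable f -> Summable (fun x => c * f x).
Proof. intros [s Hs]. eexists; apply has_sum_scal; eauto. Qed.
Lemma Summable_ext f g : (forall x, f x = g x) -> Summable f -> Summable g.
Proof. intros E [s Hs]. exists s; eapply has_sum_ext; eauto. Qed.

Lemma has_sum_ub f s : (forall x, 0 <= f x) -> has_sum f s -> forall G, NoDup G -> sum_list f G <= s.
Proof.
  intros Hf Hs G NG. apply Rnot_lt_le. intros Hlt.
  destruct (Hs (sum_list f G - s) ltac:(lra)) as [F [_ HF]].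
  destruct (NoDup_union eqd G F) as [ND [I1 I2]].
  specialize (HF _ ND I2). pose proof (sl_incl_le eqd f _ _ Hf NG I1). rabs; lra.
Qed.

Lemma has_sum_approx f s e : has_sum f s -> 0 < e -> exists G, NoDup G /\ s - e < sum_list f G.
Proof.
  intros Hs He. destruct (Hs e He) as [F [ND HF]]. exists F; split; auto.
  specialize (HF F ND (incl_refl _)). rabs; lra.
Qed.

Lemma bounded_has_sum f B : (forall x, 0 <= f x) -> (forall G, NoDup G -> sum_list f G <= B) ->
  exists s, has_sum f s /\ s <= B.
Proof.
  intros Hf HB. set (E := fun r => exists G, NoDup G /\ r = sum_list f G).
  assert (bound E) by (exists B; intros r [G [NG ->]]; auto).
  assert (exists r, E r) by (exists 0; exists []; split; [constructor|reflexivity]).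
  destruct (completeness E H H0) as [s [Hub Hlub]].
  exists s; split.
  - intros e He. destruct (classic (exists G, NoDup G /\ s - e < sum_list f G)) as [[G [NG HG]]|n].
    + exists G; split; auto. intros G' NG' IG.
      pose proof (sl_incl_le eqd f _ _ Hf NG IG).
      assert (sum_list f G' <= s) by (apply Hub; exists G'; auto). rabs; lra.
    + exfalso. assert (is_upper_bound E (s - e)).
      { intros r [G [NG ->]]. apply Rnot_lt_le; intros Hl; apply n; eauto. }
      specialize (Hlub _ H1). lra.
  - apply Hlub. intros r [G [NG ->]]; auto.
Qed.

Lemma Sum_nonneg f : (forall x, 0 <= f x) -> 0 <= Sum f.
Proof.
  intros Hf. destruct (classic (Summable f)) as [Hs|n].
  - pose proof (has_sum_ub f _ Hf (Sum_spec f Hs) [] (NoDup_nil _)). simpl in H; auto.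
  - unfold Sum. destruct excluded_middle_informative; [tauto|lra].
Qed.

Lemma Sum_ub f G : (forall x, 0 <= f x) -> Summable f -> NoDup G -> sum_list f G <= Sum f.
Proof. intros Hf Hs NG. apply (has_sum_ub f); auto. apply Sum_spec; auto. Qed.

Lemma Sum_bounded f B : (forall x, 0 <= f x) -> (forall G, NoDup G -> sum_list f G <= B) ->
  Summable f /\ Sum f <= B.
Proof.
  intros Hf HB. destruct (bounded_has_sum f B Hf HB) as [s [Hs Hle]].
  split; [exists s; auto|]. rewrite (Sum_eq _ _ Hs); auto.
Qed.

Lemma Summable_le f g : (forall x, 0 <= f x) -> (forall x, f x <= g x) -> Summable g -> Summable f.
Proof.
  intros H0 H1 Hg. apply (Sum_bounded f (Sum g) H0). intros G NG.
  eapply Rle_trans. apply sl_le; intros; apply H1.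
  apply Sum_ub; auto. intros x; specialize (H0 x); specialize (H1 x); lra.
Qed.

Lemma Sum_le f g : Summable f -> Summable g -> (forall x, f x <= g x) -> Sum f <= Sum g.
Proof.
  intros Hf Hg H. assert (0 <= Sum (fun x => g x - f x)) by (apply Sum_nonneg; intros x; specialize (H x); lra).
  rewrite Sum_minus in H0; auto. lra.
Qed.

Lemma Summable_abs f : Summable (fun x => Rabs (f x)) -> Summable f.
Proof.
  intros Ha.
  assert (P : Summable (fun x => (Rabs (f x) + f x) / 2)).
  { apply (Summable_le _ (fun x => Rabs (f x))); auto; intros x; rabs; lra. }
  assert (N : Summable (fun x => (Rabs (f x) - f x) / 2)).
  { apply (Summable_le _ (fun x => Rabs (f x))); auto; intros x; rabs; lra. }
  eapply Summable_ext; [|apply (Summable_minus _ _ P N)]. intros x; simpl; lra.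
Qed.

Lemma Sum_abs f : Summable (fun x => Rabs (f x)) -> Rabs (Sum f) <= Sum (fun x => Rabs (f x)).
Proof.
  intros Ha. pose proof (Summable_abs f Ha) as Hf.
  assert (Sum f <= Sum (fun x => Rabs (f x))) by (apply Sum_le; [exact Hf|exact Ha|intros; apply Rle_abs]).
  assert (Sum (fun x => -1 * f x) <= Sum (fun x => Rabs (f x))).
  { apply Sum_le; auto. apply Summable_scal; auto. intros x; rabs; lra. }
  rewrite Sum_scal in H0; auto. apply Rabs_le; lra.
Qed.

Lemma Sum_single f x0 : (forall x, x <> x0 -> f x = 0) -> Sum f = f x0.
Proof.
  intros Hz. apply Sum_eq. intros e He. exists [x0]; split.
  - constructor; [simpl; tauto|constructor].
  - intros G NG IG. rewrite (sl_single f x0); auto. rabs; lra. apply IG; left; auto.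
Qed.

Lemma Summable_sl {I} (F : I -> T -> R) l : (forall i, In i l -> Summable (F i)) ->
  Summable (fun x => sum_list (fun i => F i x) l) /\
  Sum (fun x => sum_list (fun i => F i x) l) = sum_list (fun i => Sum (F i)) l.
Proof.
  induction l as [|a l IH]; intros H; simpl.
  - split; [exists 0; apply has_sum_zero|]. apply Sum_eq, has_sum_zero.
  - destruct IH as [S1 E1]; [intros; apply H; right; auto|].
    assert (Sa : Summable (F a)) by (apply H; left; auto).
    split; [apply Summable_plus; auto|]. rewrite Sum_plus; auto. rewrite E1; auto.
Qed.
End HS.
Lemma has_sum_bij {A B : Type} (phi : A -> B) (psi : B -> A) (f : B -> R) s :
  (forall x, psi (phi x) = x) -> (forall y, phi (psi y) = y) ->
  has_sum f s -> has_sum (fun x => f (phi x)) s.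
Proof.
  intros H1 H2 Hf e He. destruct (Hf e He) as [F [ND HF]].
  exists (map psi F). split.
  - apply Injective_map_NoDup; auto. intros a b E. rewrite <- (H2 a), <- (H2 b), E; auto.
  - intros G NG IG. rewrite <- (sl_map f phi). apply HF.
    + apply Injective_map_NoDup; auto. intros a b E. rewrite <- (H1 a), <- (H1 b), E; auto.
    + intros y Hy. rewrite <- (H2 y). apply in_map. apply IG. apply in_map; auto.
Qed.

Lemma Summable_bij {A B : Type} (phi : A -> B) (psi : B -> A) (f : B -> R) :
  (forall x, psi (phi x) = x) -> (forall y, phi (psi y) = y) ->
  Summable f -> Summable (fun x => f (phi x)).
Proof. intros H1 H2 [s Hs]. exists s. eapply has_sum_bij; eauto. Qed.

Lemma Sum_bij {A B : Type} (eqd : forall x y : A, {x = y} + {x <> y}) (eqb : forall x y : B, {x = y} + {x <> y}) (phi : A -> B) (psi : B -> A) (f : B -> R) :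
  (forall x, psi (phi x) = x) -> (forall y, phi (psi y) = y) ->
  Summable f -> Sum (fun x => f (phi x)) = Sum f.
Proof. intros H1 H2 Hs. apply (Sum_eq eqd). eapply has_sum_bij; eauto. apply (Sum_spec eqb); auto. Qed.

Definition pdec {A B : Type} (ea : forall x y : A, {x = y} + {x <> y}) (eb : forall x y : B, {x = y} + {x <> y}) :
  forall x y : A * B, {x = y} + {x <> y}.
Proof. decide equality. Defined.

Section Ton.
Context {A B : Type} (ea : forall x y : A, {x = y} + {x <> y}) (eb : forall x y : B, {x = y} + {x <> y}).
Let ep := pdec ea eb.
Variable F : A * B -> R.

Lemma sl_prod LA LB : sum_list F (list_prod LA LB) = sum_list (fun a => sum_list (fun b => F (a, b)) LB) LA.
Proof.
  induction LA as [|a LA IH]; simpl; auto. rewrite sl_app, IH, sl_map; auto.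
Qed.

Lemma NoDup_prod (LA : list A) (LB : list B) : NoDup LA -> NoDup LB -> NoDup (list_prod LA LB).
Proof.
  intros NA NB. induction NA as [|a LA Ha NA IH]; simpl; [constructor|].
  apply NoDup_app; auto.
  - apply Injective_map_NoDup; auto. intros x y E; injection E; auto.
  - intros [x y] H1 H2. apply in_map_iff in H1. destruct H1 as [b [E _]]. injection E; intros; subst.
    apply in_prod_iff in H2. tauto.
Qed.

Lemma incl_prod (G : list (A * B)) : incl G (list_prod (nodup ea (map fst G)) (nodup eb (map snd G))).
Proof.
  intros [a b] H. apply in_prod_iff; split; apply nodup_In.
  change a with (fst (a, b)); apply in_map; auto.
  change b with (snd (a, b)); apply in_map; auto.
Qed.

Hypothesis Fnn : forall x, 0 <= F x.

Lemma ton_slice s : has_sum F s -> forall a, Summable (fun b => F (a, b)).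
Proof.
  intros Hs a. apply (Sum_bounded eb _ s); [intros; apply Fnn|].
  intros LB NB. rewrite <- (sl_map F (pair a)). apply (has_sum_ub ep); auto.
  apply Injective_map_NoDup; auto. intros x y E; injection E; auto.
Qed.

Lemma ton_iter s : has_sum F s -> has_sum (fun a => Sum (fun b => F (a, b))) s.
Proof.
  intros Hs. pose proof (ton_slice s Hs) as Sl.
  destruct (bounded_has_sum ea (fun a => Sum (fun b => F (a, b))) s) as [t [Ht Hle]].
  - intros; apply (Sum_nonneg eb); intros; apply Fnn.
  - intros LA NA. destruct (Summable_sl eb (fun a b => F (a, b)) LA) as [S1 E1]; [intros; auto|].
    rewrite <- E1. apply (Sum_bounded eb); [intros; apply sl_nonneg; intros; apply Fnn|].
    intros LB NB. 
    replace (sum_list (fun x => sum_list (fun i => F (i, x)) LA) LB) with (sum_list F (list_prod LA LB)).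
    + apply (has_sum_ub ep); auto. apply NoDup_prod; auto.
    + rewrite sl_prod. clear. induction LA; simpl. rewrite sl_zero; auto.
      rewrite IHLA, sl_plus; auto.
  - replace s with t; auto. apply Rle_antisym; auto.
    apply Rnot_lt_le. intros Hlt. destruct (has_sum_approx F s (s - t) Hs ltac:(lra)) as [G [NG HG]].
    set (LA := nodup ea (map fst G)). set (LB := nodup eb (map snd G)).
    assert (sum_list F G <= sum_list F (list_prod LA LB)).
    { apply (sl_incl_le ep); auto. apply incl_prod. }
    rewrite sl_prod in H.
    assert (sum_list (fun a => sum_list (fun b => F (a, b)) LB) LA <= sum_list (fun a => Sum (fun b => F (a, b))) LA).
    { apply sl_le; intros. apply (Sum_ub eb); auto. apply NoDup_nodup. }
    assert (sum_list (fun a => Sum (fun b => F (a, b))) LA <= t).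
    { apply (has_sum_ub ea); auto. intros; apply (Sum_nonneg eb); auto. apply NoDup_nodup. }
    lra.
Qed.

Lemma ton_from_iter (g : A -> R) t : (forall a, has_sum (fun b => F (a, b)) (g a)) -> has_sum g t -> has_sum F t.
Proof.
  intros Hg Ht.
  assert (gnn : forall a, 0 <= g a).
  { intros a. pose proof (has_sum_ub eb _ _ (fun b => Fnn (a, b)) (Hg a) [] (NoDup_nil _)). simpl in H; auto. }
  destruct (bounded_has_sum ep F t Fnn) as [s [Hs _]].
  - intros G NG. eapply Rle_trans. apply (sl_incl_le ep); eauto. apply incl_prod.
    rewrite sl_prod. eapply Rle_trans; [|apply (has_sum_ub ea g); eauto; apply NoDup_nodup].
    apply sl_le; intros. apply (has_sum_ub eb); auto. apply NoDup_nodup.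
  - replace t with s; auto. apply (has_sum_unique ea (fun a => Sum (fun b => F (a, b)))).
    apply ton_iter; auto. eapply has_sum_ext; [|eauto]. intros a; symmetry; apply (Sum_eq eb); auto.
Qed.
End Ton.

Lemma has_sum_swap {A B} (F : A * B -> R) s : has_sum F s -> has_sum (fun x => F (snd x, fst x)) s.
Proof.
  intros H. apply (has_sum_bij (fun x : B * A => (snd x, fst x)) (fun y : A * B => (snd y, fst y)) F); auto;
  intros [a b]; reflexivity.
Qed.

Section Fub.
Context {A B : Type} (ea : forall x y : A, {x = y} + {x <> y}) (eb : forall x y : B, {x = y} + {x <> y}).
Let ep := pdec ea eb.
Variable F : A * B -> R.
Hypothesis Fa : Summable (fun x => Rabs (F x)).

Lemma fub : (forall a, Summable (fun b => F (a, b))) /\ has_sum (fun a => Sum (fun b => F (a, b))) (Sum F).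
Proof.
  set (P := fun x => (Rabs (F x) + F x) / 2). set (N := fun x => (Rabs (F x) - F x) / 2).
  assert (Pn : forall x, 0 <= P x) by (intros; unfold P; rabs; lra).
  assert (Nn : forall x, 0 <= N x) by (intros; unfold N; rabs; lra).
  assert (SP : Summable P) by (apply (Summable_le ep _ (fun x => Rabs (F x))); auto; intros; unfold P; rabs; lra).
  assert (SN : Summable N) by (apply (Summable_le ep _ (fun x => Rabs (F x))); auto; intros; unfold N; rabs; lra).
  pose proof (Sum_spec ep _ SP) as HP. pose proof (Sum_spec ep _ SN) as HN.
  assert (EF : forall x, F x = P x - N x) by (intros; unfold P, N; lra).
  assert (SlP := ton_slice ea eb P Pn _ HP). assert (SlN := ton_slice ea eb N Nn _ HN).
  assert (Sl : forall a, Summable (fun b => F (a, b))).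
  { intros a. eapply Summable_ext; [|apply (Summable_minus eb _ _ (SlP a) (SlN a))]. intros; simpl; rewrite EF; auto. }
  split; auto.
  assert (SF : Sum F = Sum P - Sum N).
  { rewrite <- (Sum_minus ep); auto. apply Sum_ext; auto. }
  rewrite SF. eapply has_sum_ext; [|apply (has_sum_minus ea); [apply (ton_iter ea eb P Pn)|apply (ton_iter ea eb N Nn)]; auto].
  intros a. simpl. rewrite <- (Sum_minus eb); auto. apply Sum_ext; intros; rewrite EF; auto.
Qed.
End Fub.
Lemma len_vadd u v : length (vadd u v) = Nat.min (length u) (length v).
Proof. unfold vadd. rewrite length_map, length_combine; auto. Qed.
Lemma len_vsub u v : length (vsub u v) = Nat.min (length u) (length v).
Proof. unfold vsub. rewrite length_map, length_combine; auto. Qed.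
Lemma len_vneg u : length (vneg u) = length u.
Proof. unfold vneg; rewrite length_map; auto. Qed.

Ltac vind u v := revert v; induction u as [|a u IH]; intros [|b v]; simpl; intros; try discriminate; auto.

Lemma vsub_vadd_l w J : length w = length J -> vsub (vadd w J) w = J.
Proof. unfold vsub, vadd. vind w J. f_equal; simpl; try lia; apply IH; lia. Qed.
Lemma vadd_vsub_l w w' : length w = length w' -> vadd w (vsub w' w) = w'.
Proof. unfold vsub, vadd. vind w w'. f_equal; simpl; try lia; apply IH; lia. Qed.
Lemma vsub_vadd_r y J : length y = length J -> vsub (vadd y J) J = y.
Proof. unfold vsub, vadd. vind y J. f_equal; simpl; try lia; apply IH; lia. Qed.
Lemma vadd_vsub_r x J : length x = length J -> vadd (vsub x J) J = x.
Proof. unfold vsub, vadd. vind x J. f_equal; simpl; try lia; apply IH; lia. Qed.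
Lemma vadd_vneg y J : length y = length J -> vadd y (vneg J) = vsub y J.
Proof. unfold vsub, vadd, vneg. vind y J. f_equal; simpl; try lia; apply IH; lia. Qed.
Lemma vsub_assoc x J s : length x = length J -> length J = length s ->
  vsub x (vadd J s) = vsub (vsub x s) J.
Proof.
  unfold vsub, vadd. revert J s; induction x as [|a x IH]; intros [|b J] [|c s]; simpl; intros; try discriminate; auto.
  f_equal; simpl; try lia; apply IH; lia.
Qed.
Lemma vsub_zeros x : vsub x (zeros (length x)) = x.
Proof. unfold vsub, zeros. induction x; simpl; auto. rewrite IHx. f_equal. lia. Qed.
Lemma len_zeros d : length (zeros d) = d.
Proof. unfold zeros; apply repeat_length. Qed.
Lemma len_unitv d j : length (unitv d j) = d.
Proof. unfold unitv; rewrite length_map, length_seq; auto. Qed.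
Lemma len_vsum d Js : (forall J, In J Js -> length J = d) -> length (vsum d Js) = d.
Proof.
  induction Js as [|J Js IH]; simpl; intros H. apply len_zeros.
  rewrite len_vadd, IH, H; auto. lia.
Qed.
Lemma nth_sq_le i v : IZR (nth i v 0%Z) * IZR (nth i v 0%Z) <= norm2 v.
Proof.
  revert i; induction v as [|a v IH]; intros [|i]; simpl.
  - lra. - lra.
  - assert (0 <= norm2 v) by (clear; induction v; simpl; [lra|]; pose proof (Rle_0_sqr (IZR a)); unfold Rsqr in *; lra). lra.
  - specialize (IH i). pose proof (Rle_0_sqr (IZR a)); unfold Rsqr in *; lra.
Qed.
Definition ev : forall x y : vec, {x = y} + {x <> y} := veq_dec.
Definition epv := pdec veq_dec veq_dec.

Section Main.
Variable d : nat.
Variable p : vec -> vec -> R.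
Hypothesis Hpnn : forall w w', 0 <= p w w'.
Hypothesis Hsupp : forall w w', p w w' <> 0 -> length w = d /\ length w' = d.
Hypothesis Hsum : has_sum (fun ww : vec * vec => p (fst ww) (snd ww)) 1.
Hypothesis Hexch : forall w w', p w w' = p w' w.

Definition isL (x : vec) := Nat.eq_dec (length x) d.
Definition P (ww : vec * vec) := p (fst ww) (snd ww).
Lemma Pnn x : 0 <= P x. Proof. apply Hpnn. Qed.

Lemma p0l w w' : length w <> d -> p w w' = 0.
Proof. intros H. destruct (Req_dec (p w w') 0); auto. apply Hsupp in H0; tauto. Qed.
Lemma p0r w w' : length w' <> d -> p w w' = 0.
Proof. intros H. destruct (Req_dec (p w w') 0); auto. apply Hsupp in H0; tauto. Qed.

Lemma Sum_zero {T} (eqd : forall x y : T, {x = y} + {x <> y}) (f : T -> R) : (forall x, f x = 0) -> Sum f = 0.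
Proof. intros H. rewrite (Sum_ext f (fun _ => 0)); auto. apply (Sum_eq eqd), has_sum_zero. Qed.

Lemma slice_sum w : Summable (p w).
Proof. eapply Summable_ext; [|apply (ton_slice ev ev P Pnn 1 Hsum w)]. reflexivity. Qed.

Lemma pW_has_sum : has_sum (pW p) 1.
Proof. eapply has_sum_ext; [|apply (ton_iter ev ev P Pnn 1 Hsum)]. reflexivity. Qed.
Lemma pW_Summable : Summable (pW p). Proof. exists 1; apply pW_has_sum. Qed.

Lemma pW_nn w : 0 <= pW p w. Proof. apply (Sum_nonneg ev); auto. Qed.
Lemma pW0 w : length w <> d -> pW p w = 0.
Proof. intros H. apply (Sum_zero ev). intros; apply p0l; auto. Qed.
Lemma pW_L w : pW p w <> 0 -> length w = d.
Proof. intros H. destruct (isL w); auto. exfalso; apply H, pW0; auto. Qed.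
Lemma p_le_pW w w' : p w w' <= pW p w.
Proof.
  unfold pW. pose proof (Sum_ub ev (p w) [w'] (Hpnn w) (slice_sum w)). simpl in H. rewrite Rplus_0_r in H.
  apply H. constructor; [simpl; tauto|constructor]. 
Qed.
Lemma pW_sum1 : Sum (pW p) = 1. Proof. apply (Sum_eq ev), pW_has_sum. Qed.

Lemma pWxi_eq w J : pWxi p w J = if isL J then p w (vadd w J) else 0.
Proof.
  unfold pWxi. rewrite (Sum_single ev _ (vadd w J)).
  - destruct (veq_dec (vsub (vadd w J) w) J) as [E|n]; destruct (isL J) as [l|l].
    + reflexivity.
    + destruct (Req_dec (p w (vadd w J)) 0); auto. apply Hsupp in H. destruct H.
      rewrite <- E in l. rewrite len_vsub in l. lia.
    + destruct (isL w). exfalso; apply n. apply vsub_vadd_l; congruence. symmetry; apply p0l; auto.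
    + reflexivity.
  - intros w' Hne. destruct (veq_dec (vsub w' w) J) as [E|]; auto.
    destruct (Req_dec (p w w') 0); auto. apply Hsupp in H. destruct H. exfalso; apply Hne.
    subst J. rewrite vadd_vsub_l; auto. congruence.
Qed.

Definition G w J := pWxi p w J.
Lemma G_nn w J : 0 <= G w J. Proof. unfold G; rewrite pWxi_eq; destruct isL; auto; lra. Qed.
Lemma G_le_pW w J : G w J <= pW p w.
Proof. unfold G; rewrite pWxi_eq; destruct isL. apply p_le_pW. apply pW_nn. Qed.
Lemma G_L w J : G w J <> 0 -> length w = d /\ length J = d.
Proof.
  unfold G; rewrite pWxi_eq; destruct isL; [|lra]. intros H. split; auto.
  destruct (isL w); auto. exfalso; apply H, p0l; auto.
Qed.

Definition Phi (x : vec * vec) : vec * vec :=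
  match isL (fst x), isL (snd x) with left _, left _ => (fst x, vadd (fst x) (snd x)) | _, _ => x end.
Definition Psi (y : vec * vec) : vec * vec :=
  match isL (fst y), isL (snd y) with left _, left _ => (fst y, vsub (snd y) (fst y)) | _, _ => y end.
Lemma PsiPhi x : Psi (Phi x) = x.
Proof.
  destruct x as [w J]. unfold Phi; simpl. destruct (isL w) as [a|a], (isL J) as [b|b]; unfold Psi; simpl.
  - destruct (isL w); [|congruence]. destruct (isL (vadd w J)) as [c|c].
    + rewrite vsub_vadd_l; auto; congruence.
    + rewrite len_vadd in c; lia.
  - destruct (isL w), (isL J); try congruence; auto.
  - destruct (isL w), (isL J); try congruence; auto.
  - destruct (isL w), (isL J); try congruence; auto.
Qed.
Lemma PhiPsi y : Phi (Psi y) = y.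
Proof.
  destruct y as [w w']. unfold Psi; simpl. destruct (isL w) as [a|a], (isL w') as [b|b]; unfold Phi; simpl.
  - destruct (isL w); [|congruence]. destruct (isL (vsub w' w)) as [c|c].
    + rewrite vadd_vsub_l; auto; congruence.
    + rewrite len_vsub in c; lia.
  - destruct (isL w), (isL w'); try congruence; auto.
  - destruct (isL w), (isL w'); try congruence; auto.
  - destruct (isL w), (isL w'); try congruence; auto.
Qed.

Lemma G_Phi x : G (fst x) (snd x) = P (Phi x).
Proof.
  destruct x as [w J]. unfold G, P, Phi; simpl. rewrite pWxi_eq.
  destruct (isL w), (isL J); simpl; try reflexivity.
  - symmetry; apply p0r; auto.
  - rewrite !p0l; auto.
  - symmetry; apply p0l; auto.
Qed.

Lemma G_has_sum : has_sum (fun x => G (fst x) (snd x)) 1.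
Proof.
  eapply has_sum_ext; [|apply (has_sum_bij Phi Psi P 1 PsiPhi PhiPsi Hsum)].
  intros; symmetry; apply G_Phi.
Qed.

Lemma G_swap_has_sum : has_sum (fun x => G (snd x) (fst x)) 1.
Proof. apply (has_sum_swap (fun x => G (fst x) (snd x))), G_has_sum. Qed.

Lemma Gcol J : Summable (fun w => G w J).
Proof.
  eapply Summable_ext; [|apply (ton_slice ev ev (fun x => G (snd x) (fst x)) (fun x => G_nn _ _) 1 G_swap_has_sum J)].
  reflexivity.
Qed.

Lemma q_has_sum : has_sum (qJ p) 1.
Proof.
  eapply has_sum_ext; [|apply (ton_iter ev ev (fun x => G (snd x) (fst x)) (fun x => G_nn _ _) 1 G_swap_has_sum)].
  reflexivity.
Qed.

Lemma q_nn J : 0 <= qJ p J. Proof. apply (Sum_nonneg ev). intros; apply G_nn. Qed.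

Definition shift (s y : vec) := if isL y then vadd y s else y.
Lemma vneg_vneg s : vneg (vneg s) = s.
Proof. unfold vneg. rewrite map_map. induction s; simpl; auto. rewrite IHs, Z.opp_involutive; auto. Qed.
Lemma shift_inv s y : length s = d -> shift (vneg s) (shift s y) = y.
Proof.
  intros Hs. unfold shift. destruct (isL y) as [a|a].
  - destruct (isL (vadd y s)) as [b|b].
    + rewrite vadd_vneg by (rewrite len_vadd; lia). apply vsub_vadd_r; lia.
    + rewrite len_vadd in b; lia.
  - destruct (isL y); congruence.
Qed.
Lemma shift_inv' s y : length s = d -> shift s (shift (vneg s) y) = y.
Proof. intros Hs. rewrite <- (vneg_vneg s) at 1. apply shift_inv. rewrite len_vneg; auto. Qed.
Lemma shift_L s y : length y = d -> shift s y = vadd y s.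
Proof. intros H; unfold shift; destruct (isL y); congruence. Qed.
Lemma shift_nL s y : length y <> d -> shift s y = y.
Proof. intros H; unfold shift; destruct (isL y); congruence. Qed.

Lemma Summable_shift s f : length s = d -> Summable f -> Summable (fun y => f (shift s y)).
Proof. intros Hs Hf. apply (Summable_bij (shift s) (shift (vneg s))); auto; intros; [apply shift_inv|apply shift_inv']; auto. Qed.
Lemma Sum_shift s f : length s = d -> Summable f -> Sum (fun y => f (shift s y)) = Sum f.
Proof. intros Hs Hf. apply (Sum_bij ev ev (shift s) (shift (vneg s))); auto; intros; [apply shift_inv|apply shift_inv']; auto. Qed.

Lemma QJ_nn J w : 0 <= QJ p J w.
Proof. unfold QJ. destruct Rlt_dec; [|lra]. pose proof (G_nn w J). unfold G in H.
  unfold Rdiv; apply Rmult_le_pos; [lra|left; apply Rinv_0_lt_compat; lra]. Qed.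
Lemma G_eq J w : G w J = pW p w * QJ p J w.
Proof.
  unfold QJ. destruct Rlt_dec as [l|l]. unfold G; field; lra.
  pose proof (pW_nn w). pose proof (G_le_pW w J). pose proof (G_nn w J). lra.
Qed.

Definition h J w := pW p w * Rabs (QJ p J w - qJ p J).
Lemma h_nn J w : 0 <= h J w.
Proof. unfold h. apply Rmult_le_pos; [apply pW_nn|apply Rabs_pos]. Qed.
Lemma h_le J w : h J w <= G w J + qJ p J * pW p w.
Proof.
  unfold h. rewrite G_eq. pose proof (QJ_nn J w). pose proof (q_nn J). pose proof (pW_nn w).
  assert (Rabs (QJ p J w - qJ p J) <= QJ p J w + qJ p J) by (rabs; lra).
  assert (pW p w * Rabs (QJ p J w - qJ p J) <= pW p w * (QJ p J w + qJ p J)) by (apply Rmult_le_compat_l; auto).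
  lra.
Qed.
Lemma GqpW_Summable J : Summable (fun w => G w J + qJ p J * pW p w).
Proof. apply (Summable_plus ev). apply Gcol. apply Summable_scal, pW_Summable. Qed.
Lemma h_Summable J : Summable (h J).
Proof. apply (Summable_le ev _ _ (h_nn J) (h_le J)), GqpW_Summable. Qed.
Lemma h_sum_le J : Sum (h J) <= 2 * qJ p J.
Proof.
  eapply Rle_trans. apply (Sum_le ev); [apply h_Summable|apply GqpW_Summable|apply h_le].
  rewrite (Sum_plus ev); [|apply Gcol|apply Summable_scal, pW_Summable].
  rewrite (Sum_scal ev); [|apply pW_Summable]. rewrite pW_sum1. change (Sum (fun x => G x J)) with (qJ p J).
  unfold G. lra.
Qed.
Lemma h_sum_u J : 0 < qJ p J -> Sum (h J) = qJ p J * uJ p J.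
Proof. intros H. unfold uJ, h. field. lra. Qed.
Lemma uJ_le2 J : 0 < qJ p J -> uJ p J <= 2.
Proof.
  intros H. pose proof (h_sum_le J). rewrite h_sum_u in H0; auto.
  apply (Rmult_le_reg_l (qJ p J)); lra.
Qed.
Lemma uJ_nn J : 0 < qJ p J -> 0 <= uJ p J.
Proof.
  intros H. unfold uJ. apply Rmult_le_pos. left; apply Rinv_0_lt_compat; auto.
  apply (Sum_nonneg ev); apply h_nn.
Qed.

Definition a J z := / qJ p J * h J z.
Lemma a_nn J z : 0 < qJ p J -> 0 <= a J z.
Proof. intros; unfold a. apply Rmult_le_pos; [left; apply Rinv_0_lt_compat; auto|apply h_nn]. Qed.
Lemma a_Summable J : Summable (a J). Proof. apply Summable_scal, h_Summable. Qed.
Lemma a_sum J : Sum (a J) = uJ p J.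
Proof. unfold a. rewrite (Sum_scal ev); [|apply h_Summable]. reflexivity. Qed.
Lemma a_eq J z : 0 < qJ p J -> Rabs (pW p z - G z J / qJ p J) = a J z.
Proof.
  intros Hq. unfold a, h. rewrite G_eq.
  replace (pW p z - pW p z * QJ p J z / qJ p J) with (pW p z * (/ qJ p J) * (qJ p J - QJ p J z)) by (field; lra).
  rewrite !Rabs_mult, (Rabs_pos_eq (pW p z)), (Rabs_pos_eq (/ qJ p J)), Rabs_minus_sym.
  ring. left; apply Rinv_0_lt_compat; auto. apply pW_nn.
Qed.

Lemma G_shift J y : length J = d -> G (shift J y) (vneg J) = G y J.
Proof.
  intros HJ. destruct (isL y) as [l|l].
  - rewrite shift_L; auto. unfold G; rewrite !pWxi_eq.
    destruct (isL (vneg J)) as [b|b]; [|rewrite len_vneg in b; congruence].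
    destruct (isL J); [|congruence].
    rewrite vadd_vneg by (rewrite len_vadd; lia). rewrite vsub_vadd_r by lia. apply Hexch.
  - rewrite shift_nL; auto. destruct (Req_dec (G y (vneg J)) 0) as [e|e].
    + rewrite e. destruct (Req_dec (G y J) 0); auto. apply G_L in H; tauto.
    + apply G_L in e; tauto.
Qed.

Lemma q_neg J : length J = d -> qJ p (vneg J) = qJ p J.
Proof.
  intros HJ. unfold qJ. fold G.
  transitivity (Sum (fun y => G (shift J y) (vneg J))).
  - symmetry; apply (Sum_shift J (fun w => G w (vneg J))); auto. apply Gcol.
  - apply Sum_ext; intros; apply G_shift; auto.
Qed.

Definition D (s y : vec) := if isL y then Rabs (pW p (vsub y s) - pW p y) else 0.
Lemma D_nn s y : 0 <= D s y. Proof. unfold D; destruct isL; [apply Rabs_pos|lra]. Qed.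
Lemma D_le s y : length s = d -> D s y <= pW p (shift (vneg s) y) + pW p y.
Proof.
  intros Hs. unfold D. pose proof (pW_nn (shift (vneg s) y)). pose proof (pW_nn y).
  destruct (isL y) as [l|l]; [|lra].
  rewrite shift_L, vadd_vneg by (auto; lia).
  pose proof (pW_nn (vsub y s)). rabs; lra.
Qed.
Lemma D_Summable s : length s = d -> Summable (D s).
Proof.
  intros Hs. apply (Summable_le ev _ _ (D_nn s) (fun y => D_le s y Hs)).
  apply (Summable_plus ev); [apply (Summable_shift (vneg s) (pW p)); [rewrite len_vneg; auto|apply pW_Summable]|apply pW_Summable].
Qed.

Lemma D_single J : length J = d -> 0 < qJ p J -> Sum (D J) <= uJ p J + uJ p (vneg J).
Proof.
  intros HJ Hq. assert (Hq' : 0 < qJ p (vneg J)) by (rewrite q_neg; auto).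
  assert (LnJ : length (vneg J) = d) by (rewrite len_vneg; auto).
  assert (Sa1 : Summable (fun y => a J (shift (vneg J) y))) by (apply Summable_shift; auto; apply a_Summable).
  eapply Rle_trans. apply (Sum_le ev (D J) (fun y => a J (shift (vneg J) y) + a (vneg J) y)).
  - apply D_Summable; auto.
  - apply (Summable_plus ev); auto. apply a_Summable.
  - intros y. unfold D. destruct (isL y) as [l|l].
    + rewrite shift_L, vadd_vneg by (auto; lia).
      set (z := vsub y J).
      assert (E1 : G z J = G y (vneg J)).
      { unfold G; rewrite !pWxi_eq. destruct (isL J); [|congruence]. destruct (isL (vneg J)); [|congruence].
        unfold z. rewrite vadd_vsub_r by lia. rewrite vadd_vneg by lia. apply Hexch. }
      rewrite <- (a_eq J z Hq), <- (a_eq (vneg J) y Hq').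
      rewrite q_neg in * by auto. rewrite <- E1.
      rabs; lra.
    + pose proof (a_nn J (shift (vneg J) y) Hq). pose proof (a_nn (vneg J) y Hq'). lra.
  - rewrite (Sum_plus ev); auto; [|apply a_Summable]. rewrite (Sum_shift (vneg J) (a J)); auto; [|apply a_Summable].
    rewrite !a_sum. lra.
Qed.

Lemma D_tele J s y : length J = d -> length s = d -> D (vadd J s) y <= D J (shift (vneg s) y) + D s y.
Proof.
  intros HJ Hs. unfold D. destruct (isL y) as [l|l].
  - rewrite shift_L, vadd_vneg by (auto; lia).
    destruct (isL (vsub y s)) as [l2|l2]; [|rewrite len_vsub in l2; lia].
    rewrite vsub_assoc by lia. rabs; lra.
  - rewrite shift_nL; auto. destruct (isL y); [congruence|lra].
Qed.

Lemma D_zero y : D (zeros d) y = 0.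
Proof. unfold D. destruct (isL y) as [l|l]; auto. rewrite <- l, vsub_zeros. rewrite Rminus_diag, Rabs_R0; auto. Qed.

Lemma tele Js : (forall J, In J Js -> length J = d /\ 0 < qJ p J) -> Sum (D (vsum d Js)) <= ut p Js.
Proof.
  induction Js as [|J Js IH]; intros H.
  - simpl. unfold ut; simpl. rewrite (Sum_ext _ (fun _ => 0)); [|apply D_zero]. rewrite (Sum_eq ev _ 0); [lra|apply has_sum_zero].
  - simpl vsum. destruct (H J (or_introl eq_refl)) as [HJ Hq].
    assert (Hs : length (vsum d Js) = d) by (apply len_vsum; intros; apply H; right; auto).
    specialize (IH (fun J' h => H J' (or_intror h))).
    unfold ut; rewrite sl_cons; fold (ut p Js).
    eapply Rle_trans. apply (Sum_le ev (D (vadd J (vsum d Js))) (fun y => D J (shift (vneg (vsum d Js)) y) + D (vsum d Js) y)).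
    + apply D_Summable. rewrite len_vadd; lia.
    + apply (Summable_plus ev); [apply Summable_shift|]; try apply D_Summable; auto. rewrite len_vneg; auto.
    + intros; apply D_tele; auto.
    + rewrite (Sum_plus ev); [|apply Summable_shift; [rewrite len_vneg; auto|apply D_Summable; auto]|apply D_Summable; auto].
      rewrite (Sum_shift (vneg (vsum d Js)) (D J)); [|rewrite len_vneg; auto|apply D_Summable; auto].
      pose proof (D_single J HJ Hq). lra.
Qed.

Lemma push_eq (f : vec -> R) e x : (forall y, f y <> 0 -> length y = d) -> length e = d ->
  push (fun w => vadd w e) f x = if isL x then f (vsub x e) else 0.
Proof.
  intros Hf He. unfold push. rewrite (Sum_single ev _ (vsub x e)).
  - destruct (veq_dec (vadd (vsub x e) e) x) as [E|n]; destruct (isL x) as [l|l]; auto.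
    + destruct (Req_dec (f (vsub x e)) 0); auto. apply Hf in H. rewrite <- E, len_vadd in l. lia.
    + exfalso; apply n, vadd_vsub_r; lia.
  - intros y Hy. destruct (veq_dec (vadd y e) x) as [E|]; auto.
    destruct (Req_dec (f y) 0); auto. apply Hf in H. exfalso; apply Hy. subst x. rewrite vsub_vadd_r; auto; lia.
Qed.

Lemma dTV_le (mu nu : vec -> R) b : (forall x, 0 <= mu x) -> (forall x, 0 <= nu x) ->
  Summable mu -> Summable nu -> Sum (fun x => Rabs (mu x - nu x)) <= b -> dTV mu nu <= b.
Proof.
  intros Hm Hn Sm Sn Hb.
  assert (Ha : Summable (fun x => Rabs (mu x - nu x))).
  { apply (Summable_le ev _ (fun x => mu x + nu x)); [intros; apply Rabs_pos| |apply (Summable_plus ev); auto].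
    intros x; specialize (Hm x); specialize (Hn x); rabs; lra. }
  assert (HA : forall A : vec -> bool, Rabs (prob mu A - prob nu A) <= b).
  { intros A. unfold prob.
    assert (S1 : Summable (fun x => if A x then mu x else 0)).
    { apply (Summable_le ev _ mu); auto; intros x; destruct (A x); auto; lra. }
    assert (S2 : Summable (fun x => if A x then nu x else 0)).
    { apply (Summable_le ev _ nu); auto; intros x; destruct (A x); auto; lra. }
    rewrite <- (Sum_minus ev); auto. eapply Rle_trans; [apply (Sum_abs ev)|].
    - apply (Summable_le ev _ (fun x => Rabs (mu x - nu x))); auto; [intros; apply Rabs_pos|].
      intros x; destruct (A x); [lra|rewrite Rminus_diag, Rabs_R0; apply Rabs_pos].
    - eapply Rle_trans; [|apply Hb]. apply (Sum_le ev).
      + apply (Summable_le ev _ (fun x => Rabs (mu x - nu x))); auto; [intros; apply Rabs_pos|].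
        intros x; destruct (A x); [lra|rewrite Rminus_diag, Rabs_R0; apply Rabs_pos].
      + auto.
      + intros x; destruct (A x); [lra|rewrite Rminus_diag, Rabs_R0; apply Rabs_pos]. }
  set (E := fun r => exists A : vec -> bool, r = Rabs (prob mu A - prob nu A)).
  unfold dTV, Rsup. destruct excluded_middle_informative as [e|n].
  - destruct (constructive_indefinite_description _ e) as [m [Hub Hlub]]. simpl. apply Hlub.
    intros r [A ->]; auto.
  - exfalso. apply n. assert (bound E) by (exists b; intros r [A ->]; auto).
    destruct (completeness E H) as [m Hm']. exists (Rabs (prob mu (fun _ => true) - prob nu (fun _ => true))). exists (fun _ => true); auto.
    exists m; auto.
Qed.

Lemma q_L J : 0 < qJ p J -> length J = d.
Proof.
  intros H. destruct (isL J); auto. exfalso.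
  assert (qJ p J = 0). { apply (Sum_zero ev). intros w. pose proof (G_L w J). fold (G w J).
    destruct (Req_dec (G w J) 0); auto. apply H0 in H1; tauto. }
  lra.
Qed.

Lemma part1 j Js : (j < d)%nat -> (forall J, In J Js -> 0 < qJ p J) -> vsum d Js = unitv d j ->
  dTV (push (fun w => vadd w (unitv d j)) (pW p)) (pW p) <= ut p Js.
Proof.
  intros Hj HJ Hv. set (e := unitv d j). assert (He : length e = d) by apply len_unitv.
  assert (Emu : forall x, push (fun w => vadd w e) (pW p) x = if isL x then pW p (vsub x e) else 0).
  { intros; apply push_eq; auto. apply pW_L. }
  apply dTV_le.
  - intros x; rewrite Emu; destruct isL; [apply pW_nn|lra].
  - apply pW_nn.
  - apply (Summable_le ev _ (fun x => pW p (shift (vneg e) x))).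
    + intros x; rewrite Emu; destruct isL; [apply pW_nn|lra].
    + intros x; rewrite Emu; destruct (isL x). rewrite shift_L, vadd_vneg by (auto; lia); lra. apply pW_nn.
    + apply Summable_shift; [rewrite len_vneg; auto|apply pW_Summable].
  - apply pW_Summable.
  - rewrite (Sum_ext _ (D e)).
    + unfold e; rewrite <- Hv. apply tele. intros J HJ'; split; [apply q_L|]; auto.
    + intros x. rewrite Emu. unfold D. destruct (isL x); auto. rewrite pW0; auto. rewrite Rminus_diag, Rabs_R0; auto.
Qed.

Lemma condW_nn J w : 0 < qJ p J -> 0 <= condW p J w.
Proof. intros H. unfold condW. fold (G w J). pose proof (G_nn w J). unfold Rdiv; apply Rmult_le_pos; [lra|left; apply Rinv_0_lt_compat; lra]. Qed.
Lemma condW_Summable J : Summable (condW p J).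
Proof. eapply Summable_ext; [|apply (Summable_scal (/ qJ p J)), (Gcol J)]. intros; unfold condW, Rdiv, G; ring. Qed.

Lemma part2 j Js J : (j < d)%nat -> (forall J, In J Js -> 0 < qJ p J) -> vsum d Js = unitv d j -> 0 < qJ p J ->
  dTV (push (fun w => vadd w (unitv d j)) (condW p J)) (condW p J) <= ut p Js + 2 * uJ p J.
Proof.
  intros Hj HJ Hv Hq. set (e := unitv d j). assert (He : length e = d) by apply len_unitv.
  assert (Emu : forall x, push (fun w => vadd w e) (condW p J) x = if isL x then condW p J (vsub x e) else 0).
  { intros; apply push_eq; auto. intros y Hy. unfold condW in Hy. fold (G y J) in Hy.
    destruct (Req_dec (G y J) 0) as [z|z]. rewrite z in Hy; unfold Rdiv in Hy; rewrite Rmult_0_l in Hy; tauto.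
    apply G_L in z; tauto. }
  assert (LnE : length (vneg e) = d) by (rewrite len_vneg; auto).
  apply dTV_le.
  - intros x; rewrite Emu; destruct isL; [apply condW_nn; auto|lra].
  - intros; apply condW_nn; auto.
  - apply (Summable_le ev _ (fun x => condW p J (shift (vneg e) x))).
    + intros x; rewrite Emu; destruct isL; [apply condW_nn; auto|lra].
    + intros x; rewrite Emu; destruct (isL x). rewrite shift_L, vadd_vneg by (auto; lia); lra. apply condW_nn; auto.
    + apply Summable_shift; auto; apply condW_Summable.
  - apply condW_Summable.
  - assert (SaS : Summable (fun x => a J (shift (vneg e) x))) by (apply Summable_shift; auto; apply a_Summable).
    assert (SD : Summable (D e)) by (apply D_Summable; auto).
    eapply Rle_trans. apply (Sum_le ev _ (fun x => (a J (shift (vneg e) x) + D e x) + a J x)).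
    + apply (Summable_le ev _ (fun x => condW p J (shift (vneg e) x) + condW p J x)); [intros; apply Rabs_pos| |].
      * intros x. rewrite Emu. pose proof (condW_nn J x Hq). destruct (isL x).
        rewrite shift_L, vadd_vneg by (auto; lia). pose proof (condW_nn J (vsub x e) Hq). rabs; lra.
        pose proof (condW_nn J (shift (vneg e) x) Hq). rabs; lra.
      * apply (Summable_plus ev); [apply Summable_shift; auto|]; apply condW_Summable.
    + apply (Summable_plus ev); [apply (Summable_plus ev)|]; auto. apply a_Summable.
    + intros x. rewrite Emu. unfold D. pose proof (a_nn J x Hq). pose proof (a_nn J (shift (vneg e) x) Hq). destruct (isL x) as [l|l].
      * rewrite shift_L, vadd_vneg by (auto; lia). rewrite <- !(a_eq J _ Hq).
        unfold condW; fold (G (vsub x e) J); fold (G x J). rabs; lra.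
      * assert (condW p J x = 0).
        { unfold condW; fold (G x J). destruct (Req_dec (G x J) 0) as [z|z]. rewrite z; unfold Rdiv; ring. apply G_L in z; tauto. }
        rewrite H1, Rminus_diag, Rabs_R0. lra.
    + rewrite (Sum_plus ev), (Sum_plus ev); auto; try apply a_Summable; [|apply (Summable_plus ev); auto].
      rewrite (Sum_shift (vneg e) (a J)); auto; [|apply a_Summable]. rewrite a_sum.
      assert (Sum (D e) <= ut p Js) by (unfold e; rewrite <- Hv; apply tele; intros J' HJ'; split; [apply q_L|]; auto).
      lra.
Qed.

Lemma ustar_ge J : 0 < qJ p J -> uJ p J <= ustar p.
Proof.
  intros Hq. set (E := fun x => exists J, 0 < qJ p J /\ x = uJ p J).
  unfold ustar, Rsup. fold E. destruct excluded_middle_informative as [e|n].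
  - destruct (constructive_indefinite_description _ e) as [m [Hub Hlub]]. simpl. apply Hub. exists J; auto.
  - exfalso. apply n. assert (bound E) by (exists 2; intros r [J' [H ->]]; apply uJ_le2; auto).
    destruct (completeness E H) as [m Hm]. exists (uJ p J); exists J; auto. exists m; auto.
Qed.

Lemma ustar_nn : 0 <= ustar p.
Proof.
  destruct (classic (exists J, 0 < qJ p J)) as [[J HJ]|n].
  - eapply Rle_trans; [apply uJ_nn; eauto|apply ustar_ge; auto].
  - exfalso. assert (has_sum (qJ p) 0).
    { eapply has_sum_ext; [|apply has_sum_zero]. intros J. pose proof (q_nn J).
      destruct (Req_dec (qJ p J) 0); auto. exfalso; apply n; exists J; lra. }
    pose proof (has_sum_unique ev _ _ _ q_has_sum H). lra.
Qed.

Hypothesis H2 : second_moment_finite p.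

Definition X (i : nat) (J : vec) := IZR (nth i J 0%Z).
Definition m i k J := X i J * X k J.
Definition Fik i k (ww : vec * vec) := p (fst ww) (snd ww) * (xc i ww * xc k ww).
Definition K i k (x : vec * vec) := G (fst x) (snd x) * m i k (snd x).

Lemma Mom_Summable : Summable (fun ww : vec * vec => p (fst ww) (snd ww) * norm2 (vsub (snd ww) (fst ww))).
Proof. destruct H2 as [s Hs]. exists s; auto. Qed.

Lemma Fik_abs_Summable i k : Summable (fun x => Rabs (Fik i k x)).
Proof.
  apply (Summable_le epv _ (fun ww => 2 * (p (fst ww) (snd ww) * norm2 (vsub (snd ww) (fst ww))))).
  - intros; apply Rabs_pos.
  - intros [w w']. unfold Fik, xc; simpl.
    pose proof (nth_sq_le i (vsub w' w)). pose proof (nth_sq_le k (vsub w' w)).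
    set (u := IZR (nth i (vsub w' w) 0%Z)) in *. set (v := IZR (nth k (vsub w' w) 0%Z)) in *.
    pose proof (Hpnn w w'). rewrite Rabs_mult, Rabs_pos_eq by auto.
    assert (Rabs (u * v) <= norm2 (vsub w' w) + norm2 (vsub w' w)).
    { rewrite Rabs_mult. assert (Rabs u * Rabs v <= u * u + v * v) by (rabs; nra). lra. }
    assert (p w w' * Rabs (u * v) <= p w w' * (norm2 (vsub w' w) + norm2 (vsub w' w))) by (apply Rmult_le_compat_l; auto).
    lra.
  - apply Summable_scal, Mom_Summable.
Qed.

Lemma F_Phi i k x : Fik i k (Phi x) = K i k x.
Proof.
  destruct x as [w J]. unfold Fik, K, Phi; simpl. unfold G. rewrite pWxi_eq.
  destruct (isL w) as [a0|a0], (isL J) as [b0|b0]; simpl.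
  - unfold xc, m, X; simpl. rewrite vsub_vadd_l by lia. reflexivity.
  - rewrite p0r; auto. ring.
  - rewrite !p0l; auto. ring.
  - rewrite p0l; auto. ring.
Qed.

Lemma K_abs_Summable i k : Summable (fun x => Rabs (K i k x)).
Proof.
  eapply Summable_ext; [|apply (Summable_bij Phi Psi (fun x => Rabs (Fik i k x)) PsiPhi PhiPsi (Fik_abs_Summable i k))].
  intros; simpl; rewrite F_Phi; auto.
Qed.
Lemma K_has_sum i k : has_sum (K i k) (sigma2 p i k).
Proof.
  eapply has_sum_ext; [|apply (has_sum_bij Phi Psi (Fik i k) _ PsiPhi PhiPsi)].
  - intros; simpl; apply F_Phi.
  - apply (Sum_spec epv). apply (Summable_abs epv), Fik_abs_Summable.
Qed.

Definition Ks i k (x : vec * vec) := K i k (snd x, fst x).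
Lemma Ks_abs_Summable i k : Summable (fun x => Rabs (Ks i k x)).
Proof. destruct (K_abs_Summable i k) as [s Hs]. exists s. apply (has_sum_swap (fun x => Rabs (K i k x))); auto. Qed.
Lemma Ks_Sum i k : Sum (Ks i k) = sigma2 p i k.
Proof. apply (Sum_eq epv). apply (has_sum_swap (K i k)), K_has_sum. Qed.

Lemma S1 i k : has_sum (fun J => m i k J * qJ p J) (sigma2 p i k).
Proof.
  destruct (fub ev ev (Ks i k) (Ks_abs_Summable i k)) as [Sl HS]. rewrite Ks_Sum in HS.
  eapply has_sum_ext; [|apply HS]. intros J. unfold Ks, K; simpl.
  rewrite (Sum_ext _ (fun w => m i k J * G w J)) by (intros; ring). rewrite (Sum_scal ev); [|apply Gcol]. reflexivity.
Qed.
Lemma S1s i k : Summable (fun J => m i k J * qJ p J). Proof. exists (sigma2 p i k); apply S1. Qed.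

Lemma S2 i k : Summable (fun J => Rabs (m i k J) * qJ p J).
Proof.
  destruct (Ks_abs_Summable i k) as [s Hs]. exists s.
  eapply has_sum_ext; [|apply (ton_iter ev ev (fun x => Rabs (Ks i k x)) (fun x => Rabs_pos _) s Hs)].
  intros J. unfold Ks, K; simpl.
  rewrite (Sum_ext _ (fun w => Rabs (m i k J) * G w J)).
  - rewrite (Sum_scal ev); [|apply Gcol]. reflexivity.
  - intros w. rewrite Rabs_mult, (Rabs_pos_eq (G w J)) by apply G_nn. ring.
Qed.

Lemma Kslice i k w : Summable (fun J => G w J * m i k J) /\ Summable (fun J => Rabs (G w J * m i k J)).
Proof.
  destruct (fub ev ev (K i k) (K_abs_Summable i k)) as [Sl _]. split; [apply Sl|].
  destruct (K_abs_Summable i k) as [s Hs].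
  apply (ton_slice ev ev (fun x => Rabs (K i k x)) (fun x => Rabs_pos _) s Hs w).
Qed.

Lemma slice_eq i k w : length w = d ->
  Sum (fun w' => p w w' * (xc i (w, w') * xc k (w, w'))) = Sum (fun J => G w J * m i k J).
Proof.
  intros Lw.
  set (phw := fun J : vec => if isL J then vadd w J else J).
  set (psw := fun w' : vec => if isL w' then vsub w' w else w').
  assert (I1 : forall J, psw (phw J) = J).
  { intros J; unfold phw, psw. destruct (isL J) as [l|l].
    - destruct (isL (vadd w J)) as [l2|l2]; [apply vsub_vadd_l; lia|rewrite len_vadd in l2; lia].
    - destruct (isL J); congruence. }
  assert (I2 : forall w', phw (psw w') = w').
  { intros w'; unfold phw, psw. destruct (isL w') as [l|l].
    - destruct (isL (vsub w' w)) as [l2|l2]; [apply vadd_vsub_l; lia|rewrite len_vsub in l2; lia].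
    - destruct (isL w'); congruence. }
  assert (Sf : Summable (fun w' => p w w' * (xc i (w, w') * xc k (w, w')))).
  { destruct (fub ev ev (Fik i k) (Fik_abs_Summable i k)) as [Sl _]. apply (Sl w). }
  rewrite <- (Sum_bij ev ev phw psw _ I1 I2 Sf). apply Sum_ext. intros J. unfold phw.
  unfold G; rewrite pWxi_eq. destruct (isL J) as [l|l].
  - unfold xc, m, X; simpl. rewrite vsub_vadd_l by lia. reflexivity.
  - rewrite p0r; auto. ring.
Qed.

Definition Bik i k w := Sum (fun J => Rabs (m i k J) * h J w).

Lemma Bterm_Summable i k w : Summable (fun J => Rabs (m i k J) * h J w).
Proof.
  apply (Summable_le ev _ (fun J => Rabs (G w J * m i k J) + pW p w * (Rabs (m i k J) * qJ p J))).
  - intros; apply Rmult_le_pos; [apply Rabs_pos|apply h_nn].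
  - intros J. rewrite Rabs_mult, (Rabs_pos_eq (G w J)) by apply G_nn.
    pose proof (h_le J w). pose proof (Rabs_pos (m i k J)).
    assert (Rabs (m i k J) * h J w <= Rabs (m i k J) * (G w J + qJ p J * pW p w)) by (apply Rmult_le_compat_l; auto).
    lra.
  - apply (Summable_plus ev); [apply Kslice|apply Summable_scal, S2].
Qed.

Lemma S4 i k w : pW p w * Rabs (condxx p i k w - sigma2 p i k) <= Bik i k w.
Proof.
  unfold condxx. destruct (Rlt_dec 0 (pW p w)) as [l|l].
  - assert (Lw : length w = d) by (apply pW_L; lra).
    rewrite slice_eq by auto.
    set (S := Sum (fun J => G w J * m i k J)).
    replace (pW p w * Rabs (S / pW p w - sigma2 p i k)) with (Rabs (S - pW p w * sigma2 p i k)).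
    2:{ replace (S - pW p w * sigma2 p i k) with (pW p w * (S / pW p w - sigma2 p i k)) by (field; lra).
        rewrite Rabs_mult, Rabs_pos_eq; lra. }
    rewrite <- (Sum_eq ev _ _ (S1 i k)). rewrite <- (Sum_scal ev) by apply S1s.
    unfold S. rewrite <- (Sum_minus ev) by (apply Kslice || apply Summable_scal, S1s).
    assert (PE : forall J, Rabs (G w J * m i k J - pW p w * (m i k J * qJ p J)) = Rabs (m i k J) * h J w).
    { intros J. unfold h. rewrite G_eq.
      replace (pW p w * QJ p J w * m i k J - pW p w * (m i k J * qJ p J)) with (m i k J * (pW p w * (QJ p J w - qJ p J))) by ring.
      rewrite !Rabs_mult, (Rabs_pos_eq (pW p w)) by lra. reflexivity. }
    unfold Bik. eapply Rle_trans. apply (Sum_abs ev).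
    + eapply Summable_ext; [|apply (Bterm_Summable i k w)]. intros J; rewrite PE; auto.
    + apply Req_le, Sum_ext. intros J; apply PE.
  - assert (pW p w = 0) by (pose proof (pW_nn w); lra). rewrite H, Rmult_0_l.
    apply (Sum_nonneg ev). intros; apply Rmult_le_pos; [apply Rabs_pos|apply h_nn].
Qed.

Lemma B_Summable i k : Summable (Bik i k) /\ Sum (Bik i k) = Sum (fun J => Rabs (m i k J) * Sum (h J)).
Proof.
  set (Hf := fun x : vec * vec => Rabs (m i k (fst x)) * h (fst x) (snd x)).
  assert (Hnn : forall x, 0 <= Hf x) by (intros; unfold Hf; apply Rmult_le_pos; [apply Rabs_pos|apply h_nn]).
  set (g := fun J => Rabs (m i k J) * Sum (h J)).
  assert (Sg : Summable g).
  { apply (Summable_le ev _ (fun J => 2 * (Rabs (m i k J) * qJ p J))).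
    - intros; unfold g; apply Rmult_le_pos; [apply Rabs_pos|apply (Sum_nonneg ev), h_nn].
    - intros J; unfold g. pose proof (h_sum_le J). pose proof (Rabs_pos (m i k J)).
      assert (Rabs (m i k J) * Sum (h J) <= Rabs (m i k J) * (2 * qJ p J)) by (apply Rmult_le_compat_l; auto). lra.
    - apply Summable_scal, S2. }
  assert (It : forall J, has_sum (fun w => Hf (J, w)) (g J)).
  { intros J. unfold Hf, g; simpl. apply has_sum_scal, (Sum_spec ev), h_Summable. }
  pose proof (ton_from_iter ev ev Hf Hnn g (Sum g) It (Sum_spec ev _ Sg)) as HH.
  apply has_sum_swap in HH.
  pose proof (ton_iter ev ev (fun x => Hf (snd x, fst x)) (fun x => Hnn _) _ HH) as HI.
  split.
  - exists (Sum g). eapply has_sum_ext; [|apply HI]. intros; reflexivity.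
  - apply (Sum_eq ev). eapply has_sum_ext; [|apply HI]. intros; reflexivity.
Qed.

Lemma B_bound i k : Sum (Bik i k) <= ustar p * ((sigma2 p i i + sigma2 p k k) / 2).
Proof.
  destruct (B_Summable i k) as [_ E]. rewrite E. pose proof ustar_nn as Un.
  assert (Sg : Summable (fun J => Rabs (m i k J) * Sum (h J))).
  { destruct (B_Summable i k) as [[s Hs] E2]. 
    apply (Summable_le ev _ (fun J => 2 * (Rabs (m i k J) * qJ p J))).
    - intros; apply Rmult_le_pos; [apply Rabs_pos|apply (Sum_nonneg ev), h_nn].
    - intros J. pose proof (h_sum_le J). pose proof (Rabs_pos (m i k J)).
      assert (Rabs (m i k J) * Sum (h J) <= Rabs (m i k J) * (2 * qJ p J)) by (apply Rmult_le_compat_l; auto). lra.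
    - apply Summable_scal, S2. }
  eapply Rle_trans. apply (Sum_le ev _ (fun J => ustar p * (Rabs (m i k J) * qJ p J))); auto.
  - apply Summable_scal, S2.
  - intros J. pose proof (q_nn J). pose proof (Rabs_pos (m i k J)). destruct (Rlt_dec 0 (qJ p J)) as [l|l].
    + rewrite h_sum_u by auto. pose proof (ustar_ge J l).
      assert (qJ p J * uJ p J <= qJ p J * ustar p) by (apply Rmult_le_compat_l; lra).
      assert (Rabs (m i k J) * (qJ p J * uJ p J) <= Rabs (m i k J) * (qJ p J * ustar p)) by (apply Rmult_le_compat_l; lra).
      lra.
    + assert (Eq : qJ p J = 0) by lra. pose proof (h_sum_le J). pose proof (Sum_nonneg ev (h J) (h_nn J)).
      assert (E0 : Sum (h J) = 0) by lra. rewrite E0, Eq. lra.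
  - rewrite (Sum_scal ev) by apply S2. apply Rmult_le_compat_l; auto.
    eapply Rle_trans. apply (Sum_le ev _ (fun J => / 2 * (m i i J * qJ p J + m k k J * qJ p J))).
    + apply S2.
    + apply Summable_scal, (Summable_plus ev); apply S1s.
    + intros J. pose proof (q_nn J). unfold m.
      assert (Rabs (X i J * X k J) <= / 2 * (X i J * X i J + X k J * X k J)).
      { pose proof (Rle_0_sqr (X i J - X k J)). pose proof (Rle_0_sqr (X i J + X k J)). unfold Rsqr in *.
        apply Rabs_le; lra. }
      assert (Rabs (X i J * X k J) * qJ p J <= / 2 * (X i J * X i J + X k J * X k J) * qJ p J) by (apply Rmult_le_compat_r; auto).
      lra.
    + rewrite (Sum_scal ev) by (apply (Summable_plus ev); apply S1s). rewrite (Sum_plus ev) by apply S1s.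
      rewrite !(Sum_eq ev _ _ (S1 _ _)). lra.
Qed.

Lemma part3 : ER2norm1 d p <= INR d * trace_sigma2 d p * ustar p.
Proof.
  set (l := seq 0 d).
  set (Bt := fun w => sum_list (fun i => sum_list (fun k => Bik i k w) l) l).
  assert (SB : Summable Bt /\ Sum Bt = sum_list (fun i => sum_list (fun k => Sum (Bik i k)) l) l).
  { destruct (Summable_sl ev (fun i w => sum_list (fun k => Bik i k w) l) l) as [A1 A2].
    - intros i _. apply (Summable_sl ev (fun k w => Bik i k w) l). intros; apply B_Summable.
    - split; [apply A1|]. unfold Bt; rewrite A2. apply sl_ext. intros i _.
      apply (Summable_sl ev (fun k w => Bik i k w) l). intros; apply B_Summable. }
  destruct SB as [SB EB].
  assert (Hle : forall w, pW p w * sum_list (fun i => sum_list (fun k => Rabs (condxx p i k w - sigma2 p i k)) l) l <= Bt w).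
  { intros w. unfold Bt. rewrite <- sl_scal. apply sl_le. intros i _. rewrite <- sl_scal. apply sl_le. intros k _. apply S4. }
  assert (Hnn : forall w, 0 <= pW p w * sum_list (fun i => sum_list (fun k => Rabs (condxx p i k w - sigma2 p i k)) l) l).
  { intros w. apply Rmult_le_pos. apply pW_nn. apply sl_nonneg. intros; apply sl_nonneg; intros; apply Rabs_pos. }
  unfold ER2norm1. fold l. eapply Rle_trans. apply (Sum_le ev _ Bt); auto.
  apply (Summable_le ev _ Bt); auto.
  rewrite EB. eapply Rle_trans. apply sl_le. intros i _. apply sl_le. intros k _. apply B_bound.
  pose proof ustar_nn.
  unfold trace_sigma2. fold l. set (u := ustar p). set (c := fun i => sigma2 p i i). set (Tr := sum_list c l).
  assert (Ll : length l = d) by (unfold l; apply length_seq).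
  assert (In1 : forall i, sum_list (fun k => u * ((sigma2 p i i + sigma2 p k k) / 2)) l = u / 2 * (INR d * c i) + u / 2 * Tr).
  { intros i. rewrite (sl_ext _ (fun k => u / 2 * c i + u / 2 * c k)) by (intros; unfold c; field).
    rewrite sl_plus, sl_const, sl_scal, Ll. fold Tr. ring. }
  rewrite (sl_ext _ _ l (fun i _ => In1 i)).
  rewrite sl_plus, sl_const, Ll. rewrite !sl_scal. fold Tr. clearbody u Tr. right. field.
Qed.

Lemma fold_max_ge x l : In x l -> x <= fold_right Rmax 0 l.
Proof.
  induction l as [|a l IH]; simpl; [tauto|]. intros [->|H].
  apply Rmax_l. eapply Rle_trans; [apply IH; auto|apply Rmax_r].
Qed.

Lemma main_all (Jc : nat -> list vec)
  (HJc : forall j, (j < d)%nat ->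
           (forall J, In J (Jc j) -> 0 < qJ p J) /\ vsum d (Jc j) = unitv d j) :
  (forall j, (j < d)%nat ->
     dTV (push (fun w => vadd w (unitv d j)) (pW p)) (pW p) <= ut p (Jc j) /\
     ut p (Jc j) <= utstar d p Jc) /\
  (forall j J, (j < d)%nat -> 0 < qJ p J ->
     dTV (push (fun w => vadd w (unitv d j)) (condW p J)) (condW p J)
       <= ut p (Jc j) + 2 * uJ p J /\
     ut p (Jc j) + 2 * uJ p J <= utstar d p Jc + 2 * ustar p) /\
  ER2norm1 d p <= INR d * trace_sigma2 d p * ustar p.
Proof.
  assert (UT : forall j, (j < d)%nat -> ut p (Jc j) <= utstar d p Jc).
  { intros j Hj. unfold utstar. apply fold_max_ge. apply (in_map (fun j => ut p (Jc j))). apply in_seq. lia. }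
  split; [|split].
  - intros j Hj. destruct (HJc j Hj) as [A B]. split; [apply (part1 j)|]; auto.
  - intros j J Hj Hq. destruct (HJc j Hj) as [A B]. split; [apply (part2 j)|]; auto.
    pose proof (ustar_ge J Hq). pose proof (UT j Hj). lra.
  - apply part3.
Qed.
End Main.

Theorem lemma4p3 (d : nat) (p : vec -> vec -> R) (Jc : nat -> list vec)
  (Hpmf : is_joint_pmf d p)
  (Hexch : forall w w', p w w' = p w' w)
  (H2 : second_moment_finite p)
  (HJc : forall j, (j < d)%nat ->
           (forall J, In J (Jc j) -> 0 < qJ p J) /\ vsum d (Jc j) = unitv d j) :
  (forall j, (j < d)%nat ->
     dTV (push (fun w => vadd w (unitv d j)) (pW p)) (pW p) <= ut p (Jc j) /\
     ut p (Jc j) <= utstar d p Jc) /\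
  (forall j J, (j < d)%nat -> 0 < qJ p J ->
     dTV (push (fun w => vadd w (unitv d j)) (condW p J)) (condW p J)
       <= ut p (Jc j) + 2 * uJ p J /\
     ut p (Jc j) + 2 * uJ p J <= utstar d p Jc + 2 * ustar p) /\
  ER2norm1 d p <= INR d * trace_sigma2 d p * ustar p.
Proof.
  destruct Hpmf as [Hnn [Hsupp Hsum]].
  exact (main_all d p Hnn Hsupp Hsum Hexch H2 Jc HJc).
Qed.
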